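(* In the setting described in the context, for all $\lambda>0$ and all $t\ge0$: if $R_{t\infty}>0$ then $L^{(\lambda)}_{t\infty}=\infty$, whereas if $L^{(\lambda)}_{t\infty}<\infty$ then $R_{t\infty}=0$.
   Context: Let $(\Omega,\mathcal F,\mathbb P)$ be a probability space with a filtration $\{\mathcal F_t\}_{t\ge0}$ satisfying the usual conditions; (in)equalities between random variables hold a.s. A pricing kernel is an $\{\mathcal F_t\}$-adapted càdlàg semimartingale $\{\pi_t\}_{t\ge0}$ with (a) $\pi_t>0$, (b) $\mathbb E[\pi_t]<\infty$ for all $t\ge0$, (c) $\liminf_{t\to\infty}\mathbb E[\pi_t]=0$. Fix such a pricing kernel and set $P_{tT}=\pi_t^{-1}\mathbb E[\pi_T\mid\mathcal F_t]$ for $0\le t<T$. Define the exponential rate $R_{tT}=-(T-t)^{-1}\ln P_{tT}$ and, for $\lambda>0$, the tail-Pareto rate $L^{(\lambda)}_{tT}$ by $P_{tT}=\left[1+\lambda^{-1}(T-t)L^{(\lambda)}_{tT}\right]^{-\lambda}$, i.e. $L^{(\lambda)}_{tT}=\lambda(T-t)^{-1}(P_{tT}^{-1/\lambda}-1)$. For a family $\{A_x\}_{x\in\mathbb R^+}$ of $\mathcal F_t$-measurable extended-real random variables, $\limsup_{x\to\infty}A_x:=\operatorname{ess\,inf}_{x}\operatorname{ess\,sup}_{y\ge x}A_y$, with essential supremum/infimum taken among $\mathcal F_t$-measurable random variables. The long rates are $R_{t\infty}=\limsup_{T\to\infty}R_{tT}$ and $L^{(\lambda)}_{t\infty}=\limsup_{T\to\infty}L^{(\lambda)}_{tT}$.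 *)

(* Defs.v *)
From HB Require Import structures.
From mathcomp Require Import all_boot all_order all_algebra.
From mathcomp Require Import all_classical all_reals all_analysis measurable_realfun.
Set Implicit Arguments. Unset Strict Implicit. Unset Printing Implicit Defensive.
Import Order.TTheory GRing.Theory Num.Theory.
Import numFieldNormedType.Exports.
Local Open Scope classical_set_scope.
Local Open Scope ring_scope.

Section PricingKernel.
Context {d : measure_display} {Om : measurableType d} {R : realType}.
Variable P : probability Om R.

Definition sub_sigma_algebra (G : set (set Om)) : Prop :=
  [/\ (forall A, G A -> measurable A), G setT,
      (forall A, G A -> G (~` A)) &
      (forall A : nat -> set Om, (forall n, G (A n)) -> G (\bigcup_n A n))].

Definition Gmeas (G : set (set Om)) (X : Om -> R) : Prop :=
  forall B : set R, measurable B -> G (X @^-1` B).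
Definition Gmeas_e (G : set (set Om)) (X : Om -> \bar R) : Prop :=
  forall B : set (\bar R), measurable B -> G (X @^-1` B).

Definition filtration (F : R -> set (set Om)) : Prop :=
  (forall t, 0 <= t -> sub_sigma_algebra (F t)) /\
  (forall s t, 0 <= s -> s <= t -> F s `<=` F t).

Definition usual_conditions (F : R -> set (set Om)) : Prop :=
  (forall t A, 0 <= t -> (forall s, t < s -> F s A) -> F t A) /\
  (forall N M, measurable M -> P M = 0%E -> N `<=` M -> F 0 N).

Definition rv_integrable (X : Om -> R) : Prop :=
  P.-integrable setT (EFin \o X).

Definition expectation (X : Om -> R) : \bar R := (\int[P]_x (X x)%:E)%E.

Definition cond_exp_version (G : set (set Om)) (X Y : Om -> R) : Prop :=
  [/\ Gmeas G Y, rv_integrable Y &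
      forall A, G A -> (\int[P]_(x in A) (Y x)%:E = \int[P]_(x in A) (X x)%:E)%E].

Definition adapted (F : R -> set (set Om)) (X : R -> Om -> R) : Prop :=
  forall t, 0 <= t -> Gmeas (F t) (X t).

Definition cadlag (X : R -> Om -> R) : Prop :=
  forall w, (forall s, 0 <= s -> (fun u => X u w) @ s^'+ --> X s w) /\
            (forall s, 0 < s -> cvg ((fun u => X u w) @ s^'-)).

Definition martingale (F : R -> set (set Om)) (M : R -> Om -> R) : Prop :=
  [/\ adapted F M, (forall t, 0 <= t -> rv_integrable (M t)) &
      forall s u, 0 <= s -> s <= u -> cond_exp_version (F s) (M u) (M s)].

Definition stopping_time (F : R -> set (set Om)) (tau : Om -> \bar R) : Prop :=
  (forall w, (0 <= tau w)%E) /\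
  (forall s, 0 <= s -> F s [set w | (tau w <= s%:E)%E]).

Definition stopped (M : R -> Om -> R) (tau : Om -> \bar R) : R -> Om -> R :=
  fun s w => M (fine (mine s%:E (tau w))) w.

Definition local_martingale (F : R -> set (set Om)) (M : R -> Om -> R) : Prop :=
  [/\ cadlag M, adapted F M &
      exists tau : nat -> Om -> \bar R,
        [/\ forall n, stopping_time F (tau n),
            forall n w, (tau n w <= tau n.+1 w)%E,
            {ae P, forall w, (fun n => tau n w) @ \oo --> +oo%E} &
            forall n, martingale F (stopped M (tau n))]].

Definition finite_variation (A : R -> Om -> R) : Prop :=
  forall w s, 0 <= s -> exists C : R,
    forall (n : nat) (u : nat -> R), u 0%N = 0 -> u n = s ->
      (forall i, (i < n)%N -> u i <= u i.+1) ->
      \sum_(i < n) `|A (u i.+1) w - A (u i) w| <= C.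

Definition semimartingale (F : R -> set (set Om)) (X : R -> Om -> R) : Prop :=
  [/\ cadlag X, adapted F X &
      exists M A : R -> Om -> R,
        [/\ local_martingale F M /\ (forall w, M 0 w = 0),
            cadlag A /\ adapted F A, finite_variation A,
            (forall w, A 0 w = 0) &
            {ae P, forall w, forall s, 0 <= s -> X s w = X 0 w + M s w + A s w}]].

Definition pricing_kernel (F : R -> set (set Om)) (pi : R -> Om -> R) : Prop :=
  [/\ semimartingale F pi,
      (forall t, 0 <= t -> {ae P, forall w, 0 < pi t w}),
      (forall t, 0 <= t -> rv_integrable (pi t)) &
      limf_einf (fun t => expectation (pi t)) (pinfty_nbhs R) = 0%E].

Definition is_ess_sup (G : set (set Om)) (I : set R) (A : R -> Om -> \bar R)
    (Z : Om -> \bar R) : Prop :=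
  [/\ Gmeas_e G Z,
      (forall y, I y -> {ae P, forall w, (A y w <= Z w)%E}) &
      forall W, Gmeas_e G W -> (forall y, I y -> {ae P, forall w, (A y w <= W w)%E}) ->
        {ae P, forall w, (Z w <= W w)%E}].

Definition is_ess_inf (G : set (set Om)) (I : set R) (A : R -> Om -> \bar R)
    (Z : Om -> \bar R) : Prop :=
  [/\ Gmeas_e G Z,
      (forall y, I y -> {ae P, forall w, (Z w <= A y w)%E}) &
      forall W, Gmeas_e G W -> (forall y, I y -> {ae P, forall w, (W w <= A y w)%E}) ->
        {ae P, forall w, (W w <= Z w)%E}].

Definition is_ess_limsup (G : set (set Om)) (D : set R) (A : R -> Om -> \bar R)
    (Z : Om -> \bar R) : Prop :=
  exists S : R -> Om -> \bar R,
    (forall x, 0 < x -> is_ess_sup G [set y | D y /\ x <= y] A (S x)) /\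
    is_ess_inf G [set x | 0 < x] S Z.

End PricingKernel.

(* exponential rate R_{tT} and tail-Pareto rate L^{(lam)}_{tT} of a bond price p *)
Definition exp_rate {R : realType} (t T p : R) : R := - ln p / (T - t).
Definition pareto_rate {R : realType} (lam t T p : R) : R :=
  lam / (T - t) * (p `^ (- lam^-1) - 1).

(* Main.v *)
Require Import Defs.
From HB Require Import structures.
From mathcomp Require Import all_boot all_order all_algebra.
From mathcomp Require Import all_classical all_reals all_analysis measurable_realfun.
From mathcomp Require Import ring lra.
Import Order.TTheory GRing.Theory Num.Theory.
Import numFieldNormedType.Exports.
Local Open Scope classical_set_scope.
Local Open Scope ring_scope.

Lemma det (R : realType) (lam x p : R) (k : R) : 0 < lam -> 1 <= x -> 0 <= k -> k^+2 <= x ->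
  k * (- ln p / x) - lam <= lam / x * (p `^ (- lam^-1) - 1).
Proof.
move=> hl hx hk hkx.
have x0 : 0 < x by lra.
have [p0|p0] := leP p 0.
  rewrite ln0 // oppr0 mul0r mulr0 sub0r.
  have := powR_ge0 p (- lam^-1) => h.
  rewrite mulrBr mulr1 lerBrDr.
  have h1 : lam / x <= lam by rewrite ler_pdivrMr // ler_peMr // ltW.
  have h2 : 0 <= lam / x * p `^ (- lam^-1) by apply: mulr_ge0 => //; apply: divr_ge0; lra.
  lra.
rewrite /powR gt_eqF //.
set q := ln p.
set u := - lam^-1 * q.
have hq : q = - (lam * u) by rewrite /u; field; rewrite gt_eqF.
rewrite hq opprK.
have [u0|u0] := leP u 0.
  have h1 : k * (lam * u / x) <= 0.
    by apply: mulr_ge0_le0 => //; apply: mulr_le0_ge0; [apply: mulr_ge0_le0; lra | rewrite invr_ge0; lra].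
  have := expR_gt0 u => h.
  have h2 : - lam <= lam / x * (expR u - 1).
    rewrite mulrBr mulr1.
    have h3 : lam / x <= lam by rewrite ler_pdivrMr // ler_peMr // ltW.
    have h4 : 0 <= lam / x * expR u by apply: mulr_ge0 => //; apply: divr_ge0; lra.
    lra.
  lra.
have he : (1 + u / 2) ^+ 2 <= expR u.
  have -> : u = u / 2 + u / 2 by lra.
  rewrite expRD -expr2 (_ : (u / 2 + u / 2) / 2 = u / 2); last by lra.
  by rewrite lerXn2r // ?nnegrE ?expR_ge0 ?expR_ge1Dx //; lra.
have h5 : k * u <= k^+2 + u^+2/4.
  have : 0 <= (u/2 - k)^+2 by apply: sqr_ge0.
  lra.
have h6 : k * u - x <= u + u ^+ 2 / 4 by lra.
have h7 : (1 + u/2)^+2 = 1 + u + u^+2/4 by field.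
have h8 : k * u - x <= expR u - 1 by lra.
have -> : k * ((lam * u) / x) - lam = lam / x * (k * u - x).
  by field; rewrite gt_eqF.
by rewrite ler_pM2l // divr_gt0.
Qed.

Section Aux.
Context {d : measure_display} {Om : measurableType d} {R : realType}.
Local Open Scope ereal_scope.

Lemma liminf0_ex (f : R -> \bar R) : limf_einf f (pinfty_nbhs R) = 0 ->
  forall (eps M : R), (0 < eps)%R -> exists T, (M < T)%R /\ f T < eps%:E.
Proof.
move=> h eps M he.
have hV : ereal_inf (f @` [set T | (M < T)%R]) <= 0.
  rewrite -h limf_einfE; apply: ereal_sup_ubound; exists [set T | (M < T)%R] => //.
  by exists M; split => //; rewrite num_real.
have : ereal_inf (f @` [set T | (M < T)%R]) < eps%:E.
  by apply: (le_lt_trans hV); rewrite lte_fin.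
by move=> /ereal_inf_lt [_ [T hT <-] hlt]; exists T.
Qed.

Lemma ss_set0 (G : set (set Om)) : Defs.sub_sigma_algebra G -> G set0.
Proof. by case=> _ hT hC _; rewrite -setCT; apply: hC. Qed.

Lemma ss_U (G : set (set Om)) A B : Defs.sub_sigma_algebra G -> G A -> G B -> G (A `|` B).
Proof.
move=> hG hA hB; rewrite -bigcup2E; case: (hG) => _ _ _ hU; apply: hU.
by case=> [|[|n]] //=; apply: ss_set0.
Qed.

Lemma ss_I (G : set (set Om)) A B : Defs.sub_sigma_algebra G -> G A -> G B -> G (A `&` B).
Proof.
move=> hG hA hB; rewrite -[A `&` B]setCK setCI.
case: (hG) => _ _ hC _; apply: (hC); apply: ss_U => //; [exact: hC hA|exact: hC hB].
Qed.

Lemma Gmeas_comp (G : set (set Om)) (W : Om -> \bar R) (f : \bar R -> \bar R) :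
  Gmeas_e G W -> measurable_fun setT f -> Gmeas_e G (f \o W).
Proof.
move=> hW hf B mB; rewrite comp_preimage; apply: hW.
by rewrite -[f @^-1` B]setTI; apply: hf.
Qed.

Lemma Gmeas_cst (G : set (set Om)) (c : \bar R) : Defs.sub_sigma_algebra G -> Gmeas_e G (fun _ => c).
Proof.
move=> hG B mB; have [Bc|Bc] := pselect (B c).
  by rewrite preimage_cst ifT //; [case: hG|apply/asboolP].
by rewrite preimage_cst ifF //; [apply: ss_set0|apply/asboolP].
Qed.

End Aux.
Section Ext.
Local Open Scope ereal_scope.
Lemma E1 (R : realType) (k lam a : R) (S : \bar R) : (0 < k)%R ->
  ((k * a - lam)%:E <= S) -> a%:E <= (S + lam%:E) * (k^-1)%:E.
Proof.
move=> hk; case: S => [s| |] //=.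
- rewrite lee_fin -EFinD -EFinM lee_fin => h.
  rewrite ler_pdivlMr //; move: h; rewrite mulrC; lra.
- by move=> _; rewrite /= mulyr gtr0_sg ?invr_gt0 // mul1e leey.
Qed.

Lemma E2 (R : realType) (k lam : R) (A S : \bar R) : (0 < k)%R ->
  A <= (S + lam%:E) * (k^-1)%:E -> k%:E * A - lam%:E <= S.
Proof.
move=> hk; case: S => [s| |]; last 2 first.
- by move=> _; rewrite leey.
- rewrite addNye mulNyr gtr0_sg ?invr_gt0 // mul1e leeNy_eq => /eqP ->.
  by rewrite mulrNy gtr0_sg // mul1e addNye.
case: A => [a| |] //=.
- rewrite -EFinD -EFinM -EFinM -EFinB !lee_fin ler_pdivlMr // => h.
  rewrite mulrC; lra.
- by rewrite mulrNy gtr0_sg // mul1e addNye => _; apply: leNye.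
Qed.

Lemma F1 (R : realType) (lam : R) (Rv L : \bar R) : (0 < lam)%R -> 0 < Rv ->
  (forall n : nat, (n.+1%:R)%:E * Rv - lam%:E <= L) -> L = +oo.
Proof.
move=> hl; case: Rv => [r| |] //= hr h.
- rewrite lte_fin in hr.
  case: L h => [l| |] // h.
  + pose n := Num.truncn ((l + lam) / r).
    have := h n; rewrite -EFinM -EFinB lee_fin => hn.
    have := Num.Theory.truncnS_gt ((l + lam) / r); rewrite -/n ltr_pdivrMr // => hn2.
    exfalso; lra.
  + by have := h 0%N; rewrite -EFinM -EFinB leeNy_eq.
- have := h 0%N; rewrite mulry gtr0_sg // mul1e addye //.
  by rewrite leye_eq => /eqP.
Qed.

Lemma F2 (R : realType) (lam : R) (Rv L : \bar R) : (0 < lam)%R -> 0 <= Rv -> L < +oo ->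
  (forall n : nat, (n.+1%:R)%:E * Rv - lam%:E <= L) -> Rv = 0.
Proof.
move=> hl; rewrite le_eqVlt => /orP [/eqP <- //|hR] hL h.
by have := F1 _ _ _ _ hl hR h => hLe; rewrite hLe ltxx in hL.
Qed.


End Ext.

Lemma det2 (R : realType) (lam t T p k : R) : 0 < lam -> 1 <= T - t -> 0 <= k -> k^+2 <= T - t ->
  k * exp_rate t T p - lam <= pareto_rate lam t T p.
Proof. by move=> *; rewrite /exp_rate /pareto_rate; apply: det. Qed.

Lemma D2 (R : realType) (t T c a : R) : 0 < a -> t < T -> exp_rate t T (c / a) < 0 -> a <= c.
Proof.
move=> ha htT; rewrite /exp_rate => h.
have hx : 0 < T - t by lra.
have hl : 0 < ln (c / a).
  move: h; rewrite mulNr oppr_lt0 => h; by rewrite -(pmulr_lgt0 _ (_ : 0 < (T - t)^-1)) ?invr_gt0.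
have : 1 < c / a.
  by rewrite ltNge; apply/negP => /ln_le0; rewrite leNgt hl.
by rewrite ltr_pdivlMr // mul1r => /ltW.
Qed.

Section Meas.
Local Open Scope ereal_scope.
Lemma M1 (R : realType) (c e : R) : measurable_fun setT (fun x : \bar R => (x + c%:E) * e%:E).
Proof.
apply: emeasurable_funM; last exact: measurable_cst.
by apply: emeasurable_funD; [exact: measurable_id|exact: measurable_cst].
Qed.
Lemma M2 (R : realType) (c e : R) : measurable_fun setT (fun x : \bar R => c%:E * x - e%:E).
Proof.
apply: emeasurable_funD; last exact: measurable_cst.
by apply: emeasurable_funM; [exact: measurable_cst|exact: measurable_id].
Qed.
End Meas.

Arguments E1 {R k lam a S}.
Arguments E2 {R k lam A S}.
Arguments F1 {R lam Rv L}.
Arguments F2 {R lam Rv L}.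
Arguments D2 {R t T c a}.

Theorem proposition3 (d : measure_display) (Om : measurableType d) (R : realType)
  (P : probability Om R) (F : R -> set (set Om)) (pi : R -> Om -> R)
  (hF : filtration F) (hU : usual_conditions P F) (hpi : pricing_kernel P F pi)
  (lam t : R) (hlam : 0 < lam) (ht : 0 <= t)
  (C : R -> Om -> R)
  (hC : forall T, t < T -> cond_exp_version P (F t) (pi T) (C T))
  (Rinf Linf : Om -> \bar R)
  (hR : is_ess_limsup P (F t) [set T | t < T]
          (fun T w => (exp_rate t T (C T w / pi t w))%:E) Rinf)
  (hL : is_ess_limsup P (F t) [set T | t < T]
          (fun T w => (pareto_rate lam t T (C T w / pi t w))%:E) Linf) :
  ({ae P, forall w, (0 < Rinf w)%E} -> {ae P, forall w, Linf w = +oo%E}) /\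
  ({ae P, forall w, (Linf w < +oo)%E} -> {ae P, forall w, Rinf w = 0%E}).
Proof.
have hG : Defs.sub_sigma_algebra (F t) := hF.1 t ht.
case: hpi => _ hpos hint hlim.
case: hR => SR [hSR hRi]; case: hL => SL [hSL hLi].
case: (hRi) => hRm hRlb hRglb.
case: (hLi) => hLm hLlb hLglb.
have KL : forall n : nat,
    {ae P, forall w, ((n.+1%:R)%:E * Rinf w - lam%:E <= Linf w)%E}.
  move=> n; set k : R := n.+1%:R.
  have hk : 0 < k by rewrite ltr0n.
  apply: hLglb.
    by have := Gmeas_comp _ _ _ hRm (M2 _ k lam).
  move=> x x0.
  pose z := Num.max x (t + (k^+2 + 1)).
  have xz : x <= z by rewrite le_max lexx.
  have tz : t + (k^+2 + 1) <= z by rewrite le_max lexx orbT.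
  have z0 : 0 < z by apply: lt_le_trans xz.
  case: (hSL x x0) => hSm hub _.
  pose U := fun w => ((SL x w + lam%:E) * (k^-1)%:E)%E.
  have hUm : Gmeas_e (F t) U by have := Gmeas_comp _ _ _ hSm (M1 _ lam k^-1).
  have h1 := hRlb z z0.
  have h2 : {ae P, forall w, (SR z w <= U w)%E}.
    case: (hSR z z0) => _ _ hg; apply: hg => // y [ty zy].
    have := hub y (conj ty (le_trans xz zy)).
    apply: filterS => w hw.
    apply: (E1 hk); apply: le_trans hw; rewrite lee_fin.
    have := sqr_ge0 k => hk2.
    apply: det2 => //; lra.
  by move: h1 h2; apply: filterS2 => w a b; exact: (E2 hk (le_trans a b)).
have LB : forall x, 0 < x -> {ae P, forall w, (0 <= SR x w)%E}.
  move=> x x0.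
  case: (hSR x x0) => hSm hub _.
  pose A := [set w | (SR x w < 0)%E].
  have GA : F t A.
    have := hSm _ (emeasurable_itv `]-oo, 0%E[).
    by rewrite set_itvNyo.
  have mA : measurable A by case: hG => + _ _ _; apply.
  have intA : P.-integrable A (EFin \o pi t).
    exact: integrableS measurableT mA (subsetT _) (hint t ht).
  have key : forall eps, 0 < eps -> (\int[P]_(w in A) (pi t w)%:E <= eps%:E)%E.
    move=> eps he.
    have [T [MT hT]] := liminf0_ex _ hlim eps (Num.max x t) he.
    have tT : t < T by move: MT; rewrite gt_max => /andP[].
    have xT : x <= T by move: MT; rewrite gt_max => /andP[/ltW].
    have T0 : 0 <= T by apply: ltW; apply: le_lt_trans tT.
    have Q : {ae P, forall w, ((exp_rate t T (C T w / pi t w))%:E <= SR x w)%E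
                     /\ 0 < pi t w /\ 0 < pi T w}.
      have h3 := hub T (conj tT xT).
      have h4 := hpos t ht.
      have h5 := hpos T T0.
      have h45 : {ae P, forall w, 0 < pi t w /\ 0 < pi T w}.
        by move: h4 h5; apply: filterS2 => w a b; split.
      by move: h3 h45; apply: filterS2 => w a b; split.
    case: Q => N [mN PN hN].
    have good : forall w, ~ N w -> ((exp_rate t T (C T w / pi t w))%:E <= SR x w)%E
                     /\ 0 < pi t w /\ 0 < pi T w.
      by move=> w wN; apply: contrapT => hq; apply: wN; apply: hN.
    have mAN : measurable (A `\` N) := measurableD mA mN.
    case: (hC T tT) => _ intC eqC.
    have intpiT := hint T T0.
    rewrite (negligible_integral mN mA intA PN).
    apply: (@le_trans _ _ (\int[P]_(w in A `\` N) (C T w)%:E)%E).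
      apply: le_integral => //.
      - exact: integrableS measurableT mAN (subsetT _) (hint t ht).
      - exact: integrableS measurableT mAN (subsetT _) intC.
      move=> w /set_mem [Aw Nw]; have [a [b c]] := good w Nw.
      rewrite lee_fin; apply: (D2 b tT); rewrite -lte_fin.
      exact: le_lt_trans a Aw.
    rewrite -(negligible_integral mN mA (integrableS measurableT mA (subsetT _) intC) PN).
    rewrite (eqC A GA).
    rewrite (negligible_integral mN mA (integrableS measurableT mA (subsetT _) intpiT) PN).
    apply: (@le_trans _ _ (\int[P]_(w in ~` N) (pi T w)%:E)%E).
      apply: ge0_subset_integral => //.
      - exact: measurableC.
      - exact: measurable_funS (measurable_int _ intpiT).
      - by move=> w /good [_ [_ c]]; rewrite lee_fin ltW.
    have := negligible_integral mN measurableT intpiT PN; rewrite setTD => <-.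
    exact: ltW hT.
  have I0 : (\int[P]_(w in A) (pi t w)%:E <= 0)%E.
    apply/lee_addgt0Pr => e e0; rewrite add0e; exact: key.
  case: (hpos t ht) => N0 [mN0 PN0 hN0].
  have good0 : forall w, ~ N0 w -> 0 < pi t w.
    by move=> w wN; apply: contrapT => hq; apply: wN; apply: hN0.
  have Iabs : (\int[P]_(w in A) `|(EFin \o pi t) w|)%E = 0.
    apply/eqP; rewrite eq_le; apply/andP; split; last first.
      by apply: integral_ge0 => w _; exact: abse_ge0.
    rewrite (negligible_integral mN0 mA (integrable_abse intA) PN0).
    apply: le_trans I0; rewrite [leRHS](negligible_integral mN0 mA intA PN0).
    apply: ge0_le_integral => //.
    - exact: measurableD.
    - by move=> w _; exact: abse_ge0.
    - exact: measurable_funS mA (@subDsetl _ _ _) (measurable_int _ (integrable_abse intA)).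
    - exact: measurable_funS mA (@subDsetl _ _ _) (measurable_int _ intA).
    - by move=> w [Aw /good0 hw] /=; rewrite lee_fin ger0_norm // ltW.
  have := (ae_eq_integral_abs P mA (measurable_int _ intA)).1 Iabs.
  move: (hpos t ht); apply: filterS2 => w hw heq.
  rewrite leNgt; apply/negP => Aw.
  by have := heq Aw; rewrite /= => -[] hh; rewrite hh ltxx in hw.
have R0 : {ae P, forall w, (0 <= Rinf w)%E}.
  apply: hRglb; first exact: Gmeas_cst.
  by move=> x x0; exact: LB x x0.
have KA := ae_foralln KL.
split.
- by move=> hp; move: hp KA; apply: filterS2 => w a b; exact: F1 hlam a b.
- move=> hf.
  have hfK : {ae P, forall w, (Linf w < +oo)%E /\
      forall n : nat, ((n.+1%:R)%:E * Rinf w - lam%:E <= Linf w)%E}.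
    by move: hf KA; apply: filterS2 => w a b; split.
  move: R0 hfK.
  by apply: filterS2 => w a [b c]; exact: F2 hlam a b c.
Qed.
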